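(* Let $(V_i)_{i\ge0}$ be a sequence of non-negative integers with $V_i-1\le V_{i+1}\le V_i$ for all $i$. Suppose $\rho=(\rho_1,\dots,\rho_t)\in\mathbb{Z}^t$ has non-negative entries, set $n=\|\rho\|=\sum\rho_i^2$, and suppose that for all integers $0\le k\le n/2$, $$8V_k=\min\{\|c\|-t:\ c\in\mathrm{Char}(\mathbb{Z}^t),\ |c\cdot\rho|=n-2k\}.$$ Then the entries $\rho_i$ with $\rho_i\ge2$ (as a multiset) are determined by the sequence $(V_i)_{i\ge0}$; in particular they are independent of $n$ and $t$.
   Context: $\mathbb{Z}^t$ carries the standard inner product, $\|c\|=c\cdot c$, and $\mathrm{Char}(\mathbb{Z}^t)$ is the set of vectors all of whose coordinates are odd. *)

(* Defs.v *)
From mathcomp Require Import all_boot all_order all_algebra.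
Set Implicit Arguments. Unset Strict Implicit. Unset Printing Implicit Defensive.
Import Order.TTheory GRing.Theory Num.Theory.
Local Open Scope ring_scope.

Definition normZ (t : nat) (c : 'I_t -> int) : int := \sum_(i < t) c i ^+ 2.
Definition dotZ (t : nat) (c d : 'I_t -> int) : int := \sum_(i < t) c i * d i.
Definition is_char (t : nat) (c : 'I_t -> int) : Prop := forall i, ~~ (2 %| c i)%Z.

Definition char_set (t : nat) (rho : 'I_t -> int) (k : nat) (c : 'I_t -> int) : Prop :=
  is_char c /\ `|dotZ c rho| = normZ rho - 2 * k%:Z.

Definition min_cond (V : nat -> nat) (t : nat) (rho : 'I_t -> int) : Prop :=
  forall k : nat, 2 * k%:Z <= normZ rho ->
    (exists c, char_set rho k c /\ normZ c - t%:Z = 8 * (V k)%:Z) /\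
    (forall c, char_set rho k c -> 8 * (V k)%:Z <= normZ c - t%:Z).

Definition big_entries (t : nat) (rho : 'I_t -> int) : seq int :=
  [seq rho i | i <- enum 'I_t & 2 <= rho i].

(* Main.v *)
Require Import Defs.
From mathcomp Require Import all_boot all_order all_algebra zify ring.
Set Implicit Arguments. Unset Strict Implicit. Unset Printing Implicit Defensive.
Import Order.TTheory GRing.Theory Num.Theory.
Local Open Scope ring_scope.
Lemma int_par (c : int) : (c = 2 * (c %/ 2)%Z) \/ (c = 2 * (c %/ 2)%Z + 1 /\ ~~ (2 %| c)%Z).
Proof.
have h1 := divz_eq c 2.
have h2 : 0 <= (c %% 2)%Z by apply: modz_ge0.
have h3 : (c %% 2)%Z < 2 by apply: ltz_pmod.
have [h|h] : (c %% 2)%Z = 0 \/ (c %% 2)%Z = 1 by lia.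
  by left; rewrite {1}h1 h; lia.
right; split; first by rewrite {1}h1 h; lia.
by apply/negP => /dvdz_mod0P; rewrite h.
Qed.

Lemma odd_ex (c : int) : ~~ (2 %| c)%Z -> exists a, c = 2 * a + 1.
Proof.
case: (int_par c) => [h|[h _]] hc; last by exists (c %/ 2)%Z.
by case/negP: hc; apply/dvdzP; exists (c %/ 2)%Z; rewrite {1}h mulrC.
Qed.

Lemma odd_2j1 (a : int) : ~~ (2 %| 2 * a + 1)%Z.
Proof.
apply/negP => /dvdzP [q hq]. lia.
Qed.

Definition cst (M r c : int) : int := (2 * M - 1) * (c ^+ 2 - 1) - 8 * (c * r - r ^+ 2).

Lemma argmin_ex (F : nat -> int) (L : nat) :
  exists j, (j <= L)%N && all (fun j' => F j <= F j') (iota 0 L.+1).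
Proof.
elim: L => [|L [j /andP [hjL hall]]].
  by exists 0%N; rewrite /= lexx.
have E : iota 0 L.+2 = iota 0 L.+1 ++ [:: L.+1] by rewrite -(iotaD 0 L.+1 1) addn1.
case: (lerP (F j) (F L.+1)) => h.
  by exists j; rewrite E all_cat hall (leq_trans hjL) //= h.
exists L.+1; rewrite E all_cat leqnn andTb; apply/andP; split; last by rewrite /= lexx.
apply/allP => j' hj'; apply: (le_trans (ltW h)); exact: (allP hall).
Qed.

Definition jopt (M r : int) : nat :=
  xchoose (argmin_ex (fun j => cst M r (2 * j%:Z + 1)) ((`|r|.-1) %/ 2)).
Definition copt (M r : int) : int := 2 * (jopt M r)%:Z + 1.
Definition kap (M r : int) : int := cst M r (copt M r).

Lemma jopt_le M r : (jopt M r <= (`|r|.-1) %/ 2)%N.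
Proof. by have /andP [] := xchooseP (argmin_ex (fun j => cst M r (2 * j%:Z + 1)) ((`|r|.-1) %/ 2)). Qed.

Lemma jopt_min M r j : (j <= (`|r|.-1) %/ 2)%N -> kap M r <= cst M r (2 * j%:Z + 1).
Proof.
move=> hj.
have /andP [_ /allP H] := xchooseP (argmin_ex (fun j => cst M r (2 * j%:Z + 1)) ((`|r|.-1) %/ 2)).
by apply: (H j); rewrite mem_iota add0n ltnS hj.
Qed.

Lemma copt_odd M r : ~~ (2 %| copt M r)%Z.
Proof. exact: odd_2j1. Qed.

Lemma copt_ge1 M r : 1 <= copt M r.
Proof. rewrite /copt; lia. Qed.

Lemma copt_le M r : 1 <= r -> copt M r <= r.
Proof.
move=> hr; have := jopt_le M r; rewrite /copt.
have hn : r = (`|r|%N)%:Z by rewrite gez0_abs //; lia.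
move: (jopt M r) (`|r|%N) hn => j n hn hj. lia.
Qed.

Lemma cst_step M r (j : nat) : 3 <= M -> 0 <= r -> r <= 2 * j%:Z ->
  cst M r (2 * (j.-1)%:Z + 1) <= cst M r (2 * j%:Z + 1).
Proof.
move=> hM hr hj; rewrite /cst.
case: j hj => [|j] hj /=; first by rewrite lexx.
have -> : (j.+1)%:Z = j%:Z + 1 by lia.
set J := j%:Z. have hJ : 0 <= J by rewrite /J; lia.
nia.
Qed.

Lemma cst_neg M r c : 0 <= r -> c <= 0 -> cst M r (- c) <= cst M r c.
Proof. move=> hr hc; rewrite /cst; nia. Qed.

Lemma reduce_pos M r (j : nat) : 3 <= M -> 0 <= r -> kap M r <= cst M r (2 * j%:Z + 1).
Proof.
move=> hM hr; elim: j => [|j IH]; first by apply: jopt_min.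
case: (leqP j.+1 ((`|r|.-1) %/ 2)) => hj; first exact: jopt_min.
apply: (le_trans IH).
have := cst_step (j := j.+1) hM hr; rewrite /=; apply.
have hn : r = (`|r|%N)%:Z by rewrite gez0_abs //.
move: (`|r|%N) hj hn => n hj hn. lia.
Qed.

Lemma kap_min M r c : 3 <= M -> 0 <= r -> ~~ (2 %| c)%Z -> kap M r <= cst M r c.
Proof.
move=> hM hr /odd_ex [a ->].
case: (lerP 0 a) => ha.
  have -> : a = (`|a|%N)%:Z by rewrite gez0_abs.
  exact: reduce_pos.
apply: (le_trans _ (cst_neg M hr (c := 2 * a + 1) _)); last lia.
have -> : - (2 * a + 1) = 2 * (`|-a - 1|%N)%:Z + 1 by rewrite gez0_abs; lia.
exact: reduce_pos.
Qed.

Lemma copt_nat M r : exists j : nat, copt M r = 2 * j%:Z + 1.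
Proof. by exists (jopt M r). Qed.

Lemma kap_small M r : 3 <= M -> 0 <= r -> r < M -> kap M r = 8 * (r * (r - 1)).
Proof.
move=> hM hr hrM; apply/eqP; rewrite eq_le; apply/andP; split.
  have := kap_min hM hr (odd_2j1 0); rewrite /cst; lia.
rewrite /kap; case: (copt_nat M r) => j ->; rewrite /cst.
set J := j%:Z. have hJ : 0 <= J by rewrite /J; lia.
case: (lerP J 0) => hJ0.
  have -> : J = 0 by lia. lia.
nia.
Qed.

Lemma kap_top M : 3 <= M -> kap M M = 8 * (M * (M - 1)) - 8.
Proof.
move=> hM; have hr : 0 <= M by lia.
apply/eqP; rewrite eq_le; apply/andP; split.
  have := kap_min hM hr (odd_2j1 1); rewrite /cst; nia.
rewrite /kap; case: (copt_nat M M) => j ->; rewrite /cst.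
set J := j%:Z. have hJ : 0 <= J by rewrite /J; lia.
have [->|[->|hJ2]] : J = 0 \/ J = 1 \/ 2 <= J by lia.
- nia.
- nia.
nia.
Qed.

Lemma filter_pred1_nseq (T : eqType) (M : T) (s : seq T) :
  filter (pred1 M) s = nseq (count_mem M s) M.
Proof.
elim: s => //= x s IH; case: eqP => [->|_] /=; by rewrite IH ?eqxx.
Qed.

Lemma perm_split (T : eqType) (M : T) (s : seq T) :
  perm_eq s (nseq (count_mem M s) M ++ filter (predC1 M) s).
Proof.
rewrite -filter_pred1_nseq perm_sym.
by rewrite (perm_filterC (pred1 M) s).
Qed.

Lemma sum_split (f : int -> int) (M : int) (s : seq int) :
  \sum_(x <- s) f x = f M *+ count_mem M s + \sum_(x <- filter (predC1 M) s) f x.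
Proof.
by rewrite (perm_big _ (perm_split M s)) big_cat /= big_nseq iter_addr_0.
Qed.

Lemma nil_of_empty (A : seq int) (P : int -> Prop) :
  (forall x, x \in A -> P x) -> (forall x, ~ P x) -> A = [::].
Proof. case: A => // x A h hn; by case: (hn x (h x (mem_head _ _))). Qed.

Lemma finish (M : int) (A B : seq int) :
  count_mem M A = count_mem M B -> perm_eq (filter (predC1 M) A) (filter (predC1 M) B) ->
  perm_eq A B.
Proof.
move=> hc hp.
apply: (perm_trans (perm_split M A)); rewrite perm_sym.
apply: (perm_trans (perm_split M B)); rewrite hc perm_cat2l perm_sym //.
Qed.

Lemma natmul_int (x : int) (n : nat) : x *+ n = x * n%:Z.
Proof. by rewrite -mulr_natr natz. Qed.

Lemma seq_det (m : nat) (A B : seq int) :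
  (forall x, x \in A -> 2 <= x <= m%:Z) -> (forall x, x \in B -> 2 <= x <= m%:Z) ->
  \sum_(x <- A) x * (x - 1) = \sum_(x <- B) x * (x - 1) ->
  (forall M, 3 <= M -> \sum_(x <- A) kap M x = \sum_(x <- B) kap M x) ->
  perm_eq A B.
Proof.
elim: m A B => [|m IH] A B hA hB hS hK.
  rewrite (nil_of_empty (P := fun x => 2 <= x <= 0) hA); last by move=> x; lia.
  by rewrite (nil_of_empty (P := fun x => 2 <= x <= 0) hB) //; move=> x; lia.
case: m IH hA hB => [|m] IH hA hB.
  rewrite (nil_of_empty (P := fun x => 2 <= x <= 1) hA); last by move=> x; lia.
  by rewrite (nil_of_empty (P := fun x => 2 <= x <= 1) hB) //; move=> x; lia.
set M : int := (m.+2)%:Z.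
have hA' : forall x, x \in filter (predC1 M) A -> 2 <= x < M.
  move=> x; rewrite mem_filter => /andP [hx /hA]; move: hx => /= hx.
  have : x != M by []. rewrite /M; move=> hne hx2; lia.
have hB' : forall x, x \in filter (predC1 M) B -> 2 <= x < M.
  move=> x; rewrite mem_filter => /andP [hx /hB]; move: hx => /= hx.
  have : x != M by []. rewrite /M; move=> hne hx2; lia.
have eS := hS; rewrite (sum_split _ M A) (sum_split _ M B) !natmul_int in eS.
have [hM2|hM] : M = 2 \/ 3 <= M by rewrite /M; lia.
  have e1 : filter (predC1 M) A = [::].
    by apply: (nil_of_empty hA'); move=> x; rewrite hM2; lia.
  have e2 : filter (predC1 M) B = [::].
    by apply: (nil_of_empty hB'); move=> x; rewrite hM2; lia.
  rewrite e1 e2 !big_nil in eS.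
  apply: (finish (M := M)); last by rewrite e1 e2.
  move: eS; rewrite hM2 => eS.
  move: eS; set a := count_mem _ A; set b := count_mem _ B => eS.
  have : (a%:Z = b%:Z) by move: eS; rewrite !addr0 => /eqP; rewrite (inj_eq (mulfI _)) //; move/eqP.
  by move/eqP; rewrite eqz_nat => /eqP.
have eK := hK M hM; rewrite (sum_split _ M A) (sum_split _ M B) !natmul_int kap_top // in eK.
have small : forall C, (forall x, x \in filter (predC1 M) C -> 2 <= x < M) ->
    \sum_(x <- filter (predC1 M) C) kap M x = 8 * \sum_(x <- filter (predC1 M) C) x * (x - 1).
  move=> C hC; rewrite mulr_sumr big_seq_cond [RHS]big_seq_cond; apply: eq_bigr => x /andP [hx _].
  have := hC x hx => h; apply: kap_small => //; lia.
rewrite (small A hA') (small B hB') in eK.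
have hc : count_mem M A = count_mem M B.
  move: eS eK; set cA := count_mem M A. set cB := count_mem M B. move=> eS eK.
  move: eS eK. set SA := \sum_(x <- _ | _) _. set SB := \sum_(x <- [seq x <- B | _]) _. move=> eS eK.
  have h1 : 8 * cA%:Z = 8*(M*(M-1)*cA + SA) - ((8*(M*(M-1)) - 8)*cA + 8*SA) by ring.
  have h2 : 8 * cB%:Z = 8*(M*(M-1)*cB + SB) - ((8*(M*(M-1)) - 8)*cB + 8*SB) by ring.
  rewrite eS eK -h2 in h1.
  have : (cA%:Z = cB%:Z) by lia.
  by move/eqP; rewrite eqz_nat => /eqP.
apply: (finish hc); apply: IH.
- by move=> x /hA'; rewrite /M; lia.
- by move=> x /hB'; rewrite /M; lia.
- by move: eS; rewrite hc => /addrI.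
move=> M' hM'; have := hK M' hM'.
by rewrite (sum_split _ M A) (sum_split _ M B) hc => /addrI.
Qed.

Lemma odd_neg (c : int) : ~~ (2 %| c)%Z -> ~~ (2 %| - c)%Z.
Proof.
case/odd_ex => a ->; have -> : - (2 * a + 1) = 2 * (- a - 1) + 1 by ring.
exact: odd_2j1.
Qed.

Lemma sum1 (t : nat) : \sum_(i < t) (1 : int) = t%:Z.
Proof. by rewrite big_const_ord iter_addr_0 natz. Qed.

Lemma sum_cst (M : int) (t : nat) (rho c : 'I_t -> int) :
  \sum_i cst M (rho i) (c i) = (2*M-1) * (normZ c - t%:Z) - 8 * (dotZ c rho - normZ rho).
Proof.
rewrite /cst /normZ /dotZ sumrB -!mulr_sumr !sumrB sum1 //.
Qed.

Lemma par2 (r c : int) : ~~ (2 %| c)%Z -> (2 %| r ^+ 2 - c * r)%Z.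
Proof.
case/odd_ex => a ->; apply/dvdzP.
case: (int_par r) => [h|[h _]]; set b := (r %/ 2)%Z in h.
  by exists (2 * b * b - (2 * a + 1) * b); rewrite h; ring.
by exists ((2 * b + 1) * (b - a)); rewrite h; ring.
Qed.

Lemma par (t : nat) (rho c : 'I_t -> int) : is_char c ->
  exists e, normZ rho - dotZ c rho = 2 * e.
Proof.
move=> hc; exists (\sum_i ((rho i ^+ 2 - c i * rho i) %/ 2)%Z).
rewrite /normZ /dotZ -sumrB mulr_sumr; apply: eq_bigr => i _.
by rewrite [RHS]mulrC divzK //; apply: par2.
Qed.

Definition sig (t : nat) (rho : 'I_t -> int) := \sum_i rho i.

Lemma getN (t : nat) (rho : 'I_t -> int) : (forall i, 0 <= rho i) ->
  exists N : nat, normZ rho = sig rho + 2 * N%:Z.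
Proof.
move=> h0.
have [e he] := par rho (c := fun _ => 1) (fun i => odd_2j1 0).
have hdot : dotZ (fun _ => 1) rho = sig rho by rewrite /dotZ /sig; apply: eq_bigr => i _; rewrite mul1r.
have hge : 0 <= normZ rho - sig rho.
  rewrite /normZ /sig -sumrB; apply: sumr_ge0 => i _; have := h0 i; nia.
exists `|e|%N; rewrite gez0_abs; [|rewrite hdot in he; lia].
by rewrite -hdot -he; ring.
Qed.

Lemma sig_ge0 (t : nat) (rho : 'I_t -> int) : (forall i, 0 <= rho i) -> 0 <= sig rho.
Proof. by move=> h; apply: sumr_ge0. Qed.

Lemma good_wit (V : nat -> nat) (t : nat) (rho : 'I_t -> int) k :
  min_cond V rho -> 2 * k%:Z <= normZ rho ->
  exists c, [/\ is_char c, dotZ c rho = normZ rho - 2 * k%:Z & normZ c - t%:Z = 8 * (V k)%:Z].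
Proof.
move=> hm hk; have [[c [[hc hd] hn]] _] := hm k hk.
case: (lerP 0 (dotZ c rho)) => hs.
  by exists c; split => //; rewrite -hd ger0_norm.
exists (fun i => - c i); split.
- by move=> i; apply: odd_neg.
- rewrite -hd ltr0_norm // /dotZ -sumrN; apply: eq_bigr => i _; by rewrite mulNr.
- by rewrite -hn /normZ; congr (_ - _); apply: eq_bigr => i _; rewrite sqrrN.
Qed.

Lemma A1 (V : nat -> nat) (t : nat) (rho : 'I_t -> int) (M : int) k :
  3 <= M -> (forall i, 0 <= rho i) -> min_cond V rho -> 2 * k%:Z <= normZ rho ->
  \sum_i kap M (rho i) <= 8 * (2 * k%:Z + (2 * M - 1) * (V k)%:Z).
Proof.
move=> hM h0 hm hk; have [c [hc hd hn]] := good_wit hm hk.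
apply: (le_trans (y := \sum_i cst M (rho i) (c i))).
  by apply: ler_sum => i _; apply: kap_min.
rewrite sum_cst hd hn; nia.
Qed.

Lemma A2 (V : nat -> nat) (t : nat) (rho : 'I_t -> int) (M : int) (N : nat) :
  3 <= M -> (forall i, 0 <= rho i) -> min_cond V rho -> normZ rho = sig rho + 2 * N%:Z ->
  exists k : nat, (k <= N)%N /\ 8 * (2 * k%:Z + (2 * M - 1) * (V k)%:Z) <= \sum_i kap M (rho i).
Proof.
move=> hM h0 hm hN.
set c := fun i => copt M (rho i).
have hc : is_char c by move=> i; apply: copt_odd.
have [e he] := par rho hc.
have hlo : sig rho <= dotZ c rho.
  apply: ler_sum => i _; have := copt_ge1 M (rho i); have := h0 i; rewrite /c; nia.
have hhi : dotZ c rho <= normZ rho.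
  apply: ler_sum => i _; have := h0 i; rewrite /c => hr.
  case: (lerP (rho i) 0) => hr0.
    have -> : rho i = 0 by lia. by rewrite mulr0 expr2 mulr0.
  have := @copt_le M (rho i) ltac:(lia); nia.
have hs := sig_ge0 h0.
have he0 : 0 <= e by lia.
have [k hke] : exists k : nat, k%:Z = e by exists `|e|%N; rewrite gez0_abs.
exists k; split; first by lia.
have hk : 2 * k%:Z <= normZ rho by lia.
have [_ hlow] := hm _ hk.
have hV' : 8 * (V k)%:Z <= normZ c - t%:Z.
  apply: hlow; split => //; rewrite ger0_norm; lia.
have -> : \sum_i kap M (rho i) = \sum_i cst M (rho i) (c i) by [].
rewrite sum_cst; nia.
Qed.

Lemma VN0 (V : nat -> nat) (t : nat) (rho : 'I_t -> int) (N : nat) :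
  (forall i, 0 <= rho i) -> min_cond V rho -> normZ rho = sig rho + 2 * N%:Z -> V N = 0%N.
Proof.
move=> h0 hm hN.
have hs := sig_ge0 h0.
have hk : 2 * N%:Z <= normZ rho by lia.
have [_ hlow] := hm _ hk.
have hV : 8 * (V N)%:Z <= normZ (fun _ : 'I_t => 1) - t%:Z.
  apply: hlow; split; first by move=> i; apply: (odd_2j1 0).
  have -> : dotZ (fun _ => 1) rho = sig rho by rewrite /dotZ /sig; apply: eq_bigr => i _; rewrite mul1r.
  rewrite ger0_norm //; lia.
move: hV.
have -> : normZ (fun _ : 'I_t => 1) = t%:Z by rewrite /normZ -(sum1 t); apply: eq_bigr => i _; rewrite expr1n.
lia.
Qed.

Lemma Vpos (V : nat -> nat) (t : nat) (rho : 'I_t -> int) (N k : nat) :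
  (forall i, 0 <= rho i) -> min_cond V rho -> normZ rho = sig rho + 2 * N%:Z -> (k < N)%N -> (0 < V k)%N.
Proof.
move=> h0 hm hN hkN.
have hs := sig_ge0 h0.
have hk : 2 * k%:Z <= normZ rho by lia.
have [c [hc hd hn]] := good_wit hm hk.
rewrite lt0n; apply/negP => /eqP hV0; rewrite hV0 mulr0 in hn.
have hsq : forall i, c i ^+ 2 - 1 = 0.
  move=> i0; apply: (@psumr_eq0P _ _ predT (fun i => c i ^+ 2 - 1)) => //.
    move=> i _; have := hc i; case/odd_ex => a ->; nia.
  by rewrite sumrB sum1 -/(normZ c); lia.
have habs : forall i, `|c i| = 1.
  move=> i; have /eqP := hsq i; rewrite subr_eq0 sqrf_eq1 => /orP [] /eqP ->; by [].
have : `|dotZ c rho| <= sig rho.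
  apply: (le_trans (ler_norm_sum _ _ _)); apply: ler_sum => i _.
  by rewrite normrM habs mul1r ger0_norm.
rewrite hd; lia.
Qed.

Lemma sum_big (f : int -> int) (t : nat) (rho : 'I_t -> int) :
  (forall i, 0 <= rho i) -> f 0 = 0 -> f 1 = 0 ->
  \sum_(x <- big_entries rho) f x = \sum_i f (rho i).
Proof.
move=> h0 f0 f1; rewrite /big_entries big_map big_filter big_enum_cond big_mkcond /=.
apply: eq_bigr => i _; case: ifP => // h.
have : rho i = 0 \/ rho i = 1 by move/negbT: h; rewrite -ltNge => h; have := h0 i; lia.
by case => ->.
Qed.

Lemma big_mem (t : nat) (rho : 'I_t -> int) x : x \in big_entries rho ->
  exists i, 2 <= rho i /\ x = rho i.
Proof.
by case/mapP => i; rewrite mem_filter => /andP [h _] ->; exists i.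
Qed.

Lemma le_normZ (t : nat) (rho : 'I_t -> int) i : (forall i, 0 <= rho i) -> rho i <= normZ rho.
Proof.
move=> h0; rewrite /normZ (bigD1 i) //= -[X in X <= _]addr0; apply: lerD.
  have := h0 i => h; rewrite expr2; case: (lerP (rho i) 0) => h'; nia.
by apply: sumr_ge0 => j _; rewrite sqr_ge0.
Qed.

Theorem theorem2p26 (V : nat -> nat)
  (hV : forall i : nat, (V i.+1 <= V i)%N /\ (V i <= (V i.+1).+1)%N) :
  forall (t : nat) (rho : 'I_t -> int) (t' : nat) (rho' : 'I_t' -> int),
    (forall i, 0 <= rho i) -> min_cond V rho ->
    (forall i, 0 <= rho' i) -> min_cond V rho' ->
    perm_eq (big_entries rho) (big_entries rho').
Proof.
move=> t rho t' rho' h0 hm h0' hm'.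
have [N hN] := getN h0; have [N' hN'] := getN h0'.
have eN : N = N'.
  case: (ltngtP N N') => // h.
    by have := Vpos h0' hm' hN' h; rewrite (VN0 h0 hm hN).
  by have := Vpos h0 hm hN h; rewrite (VN0 h0' hm' hN').
subst N'.
have hs := sig_ge0 h0; have hs' := sig_ge0 h0'.
have eS : forall M, 3 <= M -> \sum_i kap M (rho i) = \sum_i kap M (rho' i).
  move=> M hM; apply/eqP; rewrite eq_le; apply/andP; split.
    have [k [hk hle]] := A2 hM h0' hm' hN'.
    apply: (le_trans _ hle); apply: A1 => //; lia.
  have [k [hk hle]] := A2 hM h0 hm hN.
  apply: (le_trans _ hle); apply: A1 => //; lia.
have kap0 : forall M, 3 <= M -> kap M 0 = 0 by move=> M hM; rewrite kap_small //; lia.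
have kap1 : forall M, 3 <= M -> kap M 1 = 0 by move=> M hM; rewrite kap_small //; lia.
have hn0 : 0 <= normZ rho by apply: sumr_ge0 => j _; rewrite sqr_ge0.
have hn0' : 0 <= normZ rho' by apply: sumr_ge0 => j _; rewrite sqr_ge0.
apply: (@seq_det (absz (normZ rho + normZ rho'))).
- move=> x /big_mem [i [h2 ->]]; rewrite gez0_abs; last by lia.
  have := le_normZ i h0; lia.
- move=> x /big_mem [i [h2 ->]]; rewrite gez0_abs; last by lia.
  have := le_normZ i h0'; lia.
- rewrite !(@sum_big (fun x : int => x * (x - 1))) //; try by rewrite mul0r.
  have e1 : \sum_i rho i * (rho i - 1) = normZ rho - sig rho.
    by rewrite /normZ /sig -sumrB; apply: eq_bigr => i _; ring.
  have e2 : \sum_i rho' i * (rho' i - 1) = normZ rho' - sig rho'.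
    by rewrite /normZ /sig -sumrB; apply: eq_bigr => i _; ring.
  rewrite e1 e2; lia.
move=> M hM; rewrite !(@sum_big (kap M)) ?kap0 ?kap1 //; exact: eS.
Qed.
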